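(* There is no incompressible Følner sequence in the group $\mathbb Z^\infty=\bigoplus_{n=1}^\infty\mathbb Z$.
   Context: A sequence of translates $\{W_{n(i)}+f_i\}_{i=1}^I$ is incremental if $n(1)\ge\dots\ge n(I)$ and $f_i\notin\bigcup_{j<i}(W_{n(j)}+f_j)$. An increasing sequence $\{W_n\}$ of finite sets containing $0$ is incompressible if there is a constant $C$ such that for every incremental sequence at most $C$ of the sets $W_{n(i)}+f_i$ contain $0$. Følner: $|W_n\triangle(g+W_n)|/|W_n|\to0$ for every $g$. *)

(* Defs.v *)
From HB Require Import structures.
From mathcomp Require Import all_boot all_order all_algebra.
From mathcomp Require Import finmap.
Set Implicit Arguments. Unset Strict Implicit. Unset Printing Implicit Defensive.
Import Order.TTheory GRing.Theory Num.Theory.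
Local Open Scope ring_scope.
Local Open Scope fset_scope.

(* The group Z^infty = (+)_{n>=1} Z, as finitely supported functions
   nat -> int (coordinates indexed from 0 instead of 1). *)
Notation Zinf := {fsfun nat -> int with 0%R}.

Definition zinf0 : Zinf := [fsfun x in fset0 => (0 : int) | 0%R].

Definition zinf_add (f g : Zinf) : Zinf :=
  [fsfun k in finsupp f `|` finsupp g => (f k + g k)%R | 0%R].

Definition translate (W : {fset Zinf}) (f : Zinf) : {fset Zinf} :=
  [fset zinf_add w f | w in W].

Definition symdiff (A B : {fset Zinf}) : {fset Zinf} := (A `\` B) `|` (B `\` A).

Definition Folner (W : nat -> {fset Zinf}) : Prop :=
  forall g : Zinf, forall eps : rat, 0 < eps ->
    exists N : nat, forall n : nat, (N <= n)%N ->
      (#|` symdiff (W n) (translate (W n) g)|%:R / #|` W n|%:R : rat) < eps.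

Definition increasing_containing0 (W : nat -> {fset Zinf}) : Prop :=
  (forall n, W n `<=` W n.+1) /\ (forall n, zinf0 \in W n).

Definition incremental (W : nat -> {fset Zinf}) (s : seq (nat * Zinf)) : Prop :=
  forall i j : nat, (j < i)%N -> (i < size s)%N ->
    let pj := nth (0%N, zinf0) s j in
    let pi := nth (0%N, zinf0) s i in
    (pi.1 <= pj.1)%N /\ pi.2 \notin translate (W pj.1) pj.2.

Definition incompressible (W : nat -> {fset Zinf}) : Prop :=
  increasing_containing0 W /\
  exists C : nat, forall s : seq (nat * Zinf), incremental W s ->
    (count (fun p => zinf0 \in translate (W p.1) p.2) s <= C)%N.

(* Main.v *)
Require Import Defs.
From mathcomp Require Import all_boot all_order all_algebra.
From mathcomp Require Import finmap zify ring.
Set Implicit Arguments. Unset Strict Implicit. Unset Printing Implicit Defensive.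
Import Order.TTheory GRing.Theory Num.Theory.
Local Open Scope ring_scope.


Lemma zinf_addE (f g : Zinf) k : zinf_add f g k = f k + g k.
Proof.
rewrite /zinf_add fsfun_fun in_fsetU.
case: finsuppP => [_|//]; case: finsuppP => //= _.
Qed.

Lemma zinf0E k : zinf0 k = 0.
Proof. by rewrite /zinf0 fsfun_fun in_fset0. Qed.

Lemma translateP (W : {fset Zinf}) f x :
  reflect (exists2 w, w \in W & x = zinf_add w f) (x \in translate W f).
Proof.
apply: (iffP idP).
  by move=> /imfsetP [w wW ->]; exists w.
by move=> [w wW ->]; apply/imfsetP; exists w.
Qed.

Definition zinf_neg (f : Zinf) : Zinf := [fsfun k in finsupp f => - f k | 0%R].
Lemma zinf_negE f k : zinf_neg f k = - f k.
Proof. rewrite /zinf_neg fsfun_fun; case: finsuppP => //; by rewrite oppr0. Qed.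

Definition ek (k : nat) : Zinf := [fsfun x in [fset k]%fset => (1 : int) | 0%R].
Lemma ekE k x : ek k x = (x == k)%:R.
Proof. by rewrite /ek fsfun_fun inE; case: eqP. Qed.
Definition ev (th : seq (nat * int)) (x : Zinf) : int := \sum_(p <- th) p.2 * x p.1.

Lemma ev_lin th (w a b : Zinf) : (forall k, w k = a k - b k) -> ev th w = ev th a - ev th b.
Proof. by move=> H; rewrite /ev -sumrB; apply: eq_bigr => p _; rewrite H mulrBr. Qed.

Lemma argmin_seq (T : eqType) (s : seq T) (x0 : T) (f : T -> int) :
  x0 \in s -> exists2 y, y \in s & forall z, z \in s -> f y <= f z.
Proof.
elim: s x0 => [x0|x s IH x0 _]; first by rewrite in_nil.
case: s IH => [|x1 s] IH.
  by exists x; rewrite ?inE // => z; rewrite inE => /eqP ->.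
have [y ys Hy] := IH x1 (mem_head _ _).
case: (lerP (f x) (f y)) => Hxy.
  exists x; first by rewrite inE eqxx.
  move=> z; rewrite inE => /predU1P [->//|zs]; exact: le_trans Hxy (Hy z zs).
exists y; first by rewrite inE ys orbT.
move=> z; rewrite inE => /predU1P [->|zs]; [exact: ltW | exact: Hy].
Qed.

Lemma fresh_test (L : seq (nat * Zinf)) : exists k : nat, forall p, p \in L -> p.2 k = 0.
Proof.
exists (\max_(p <- L) \max_(x <- finsupp p.2) x).+1%N => p pL.
apply: fsfun_dflt; apply/negP => kin.
have H1 := @leq_bigmax_seq _ _ (fun _ => true) (fun x : nat => x) _ kin isT.
have H2 := @leq_bigmax_seq _ _ (fun _ => true) (fun p : nat * Zinf => \max_(x <- finsupp p.2) x) _ pL isT.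
by have := leq_trans H1 H2; rewrite ltnn.
Qed.

Lemma c2 (c e : int) : c != 0 -> 0 < c * (c * (`|e| + 1)) + e.
Proof. move=> /eqP cn0. nia. Qed.

Lemma ratio_ge1 (a b : nat) : (0 < b)%N -> (b <= a)%N -> ~ ((a%:R / b%:R : rat) < 1).
Proof.
move=> b0 ba; rewrite ltr_pdivrMr ?ltr0n // mul1r ltr_nat.
by rewrite ltnNge ba.
Qed.

Lemma folner_touch (W : nat -> {fset Zinf}) :
  Folner W -> (forall n, zinf0 \in W n) ->
  forall k nb, exists n, (nb <= n)%N /\ exists2 w, w \in W n & w k != 0.
Proof.
move=> F W0 k nb.
have [N HN] := F (ek k) 1 ltr01.
exists (maxn N nb); split; first exact: leq_maxr.
set n := maxn N nb.
have := HN n (leq_maxl _ _).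
case: (boolP (has (fun w : Zinf => w k != 0) (W n))) => [/hasP [w wW wk] _|/hasPn Hn].
  by exists w.
move=> H; exfalso; apply: (ratio_ge1 _ _ H).
  by rewrite cardfs_gt0; apply/eqP => E; have := W0 n; rewrite E inE.
apply: fsubset_leq_card; apply/fsubsetP => w wW.
rewrite /symdiff in_fsetU in_fsetD wW andbT; apply/orP; left.
apply/translateP => -[w' w'W E].
have := Hn w wW; rewrite E zinf_addE ekE eqxx.
by have := Hn w' w'W; rewrite negbK => /eqP ->.
Qed.

Definition dflt : nat * Zinf := (0%N, zinf0).

Lemma build (W : nat -> {fset Zinf}) :
  Folner W -> (forall n, zinf0 \in W n) ->
  forall m, exists (L : seq (nat * Zinf)) (th : seq (nat * int)) (nb : nat),
    [/\ size L = m,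
        forall i, (i < m)%N -> [/\ (nth dflt L i).2 \in W (nth dflt L i).1,
                               ((nth dflt L i).1 <= nb)%N & 0 < ev th (nth dflt L i).2] &
        forall i j, (j < i)%N -> (i < m)%N ->
          ((nth dflt L i).1 <= (nth dflt L j).1)%N /\
          forall w, w \in W (nth dflt L j).1 ->
            ~ (forall k, w k = (nth dflt L j).2 k - (nth dflt L i).2 k)].
Proof.
move=> F W0; elim=> [|m [L [th [nb [sL H1 H2]]]]].
  by exists [::], [::], 0%N; split.
have [k Hk] := fresh_test L.
have Hk' : forall i, (i < m)%N -> (nth dflt L i).2 k = 0.
  by move=> i im; apply: Hk; apply: mem_nth; rewrite sL.
have [n [nbn [w0 w0W w0k]]] := folner_touch F W0 k nb.
set c := w0 k.
set S := [seq w <- enum_fset (W n) | (w : Zinf) k == c].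
have w0S : w0 \in S by rewrite mem_filter eqxx.
have [a aS amin] := argmin_seq (ev th) w0S.
move: (aS); rewrite mem_filter => /andP [/eqP ak aW].
set th' := (k, c * (`|ev th a| + 1)) :: th.
have evth' : forall x : Zinf, ev th' x = c * (`|ev th a| + 1) * x k + ev th x.
  by move=> x; rewrite /ev big_cons.
exists ((n, a) :: L), th', n; split.
- by rewrite /= sL.
- case=> [_|i] /=.
    split => //; rewrite evth' ak mulrC mulrA.
    have := c2 (ev th a) w0k; congr (0 < _ + _); ring.
  rewrite ltnS => im; have [? ? ?] := H1 i im; split => //.
    exact: leq_trans nbn.
  by rewrite evth' Hk' // mulr0 add0r.
- move=> i j ji; case: i ji => // i; rewrite ltnS => ji im.
  case: j ji => [_|j ji] /=.
    have [_ ? _] := H1 i im; split; first exact: leq_trans nbn.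
    move=> w wW Hw.
    have wS : w \in S by rewrite mem_filter Hw Hk' // subr0 ak eqxx.
    have := amin w wS; rewrite (ev_lin th Hw).
    have [_ _ pos] := H1 i im.
    rewrite lerBrDl -lerBrDr subrr.
    by rewrite leNgt pos.
  exact: H2.
Qed.

Theorem corollary2p8 :
  ~ exists W : nat -> {fset Zinf}, incompressible W /\ Folner W.
Proof.
move=> [W [[[_ W0] [C HC]] F]].
have [L [th [nb [sL H1 H2]]]] := build F W0 C.+1.
pose s := map (fun p : nat * Zinf => (p.1, zinf_neg p.2)) L.
have ns : forall i, (i < C.+1)%N -> nth (0%N, zinf0) s i = ((nth dflt L i).1, zinf_neg (nth dflt L i).2).
  by move=> i iC; rewrite /s (nth_map dflt) ?sL.
have ss : size s = C.+1 by rewrite size_map.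
have inc : incremental W s.
  move=> i j ji; rewrite ss => iC /=.
  rewrite !ns //; last exact: ltn_trans ji iC.
  have [le Hn] := H2 i j ji iC; split => //=.
  apply/translateP => -[w wW E]; apply: (Hn w wW) => k.
  have := congr1 (fun f : Zinf => f k) E; rewrite /= zinf_addE !zinf_negE => E'.
  by rewrite -[w k](addrK (- (nth dflt L j).2 k)) -E' opprK addrC.
have := HC s inc.
have -> : count (fun p : nat * Zinf => zinf0 \in translate (W p.1) p.2) s = size s.
  apply/eqP; rewrite -all_count; apply/(all_nthP (0%N, zinf0)) => i; rewrite ss => iC.
  rewrite ns //=; have [aW _ _] := H1 i iC.
  apply/translateP; exists (nth dflt L i).2 => //.
  by apply/fsfunP => k; rewrite zinf_addE zinf_negE zinf0E subrr.
by rewrite ss ltnn.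
Qed.
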